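(* Let $u$ be a node and let $tx_i = t_{u,k,l}$ (the $l$-th transaction in the $k$-th block $B_{u,k}$ of $u$'s individual chain) be a transaction that is confirmed by an abstract $A_{u,k'}$ with $k' \geq k$. Then there does not exist a chain of confirmed blocks $\{B'_{u,1}, B'_{u,2}, \ldots, B'_{u,k'}\}$ of node $u$ in which all hashes are correct (i.e. the first element of each $B'_{u,m}$, $m\ge 2$, equals $H(B'_{u,m-1})$) and whose $l$-th transaction of the $k$-th block satisfies $t'_{u,k,l} \neq tx_i$.
   Context: There are $N$ nodes with identities $1,\dots,N$ and a public key infrastructure. $H$ is a hash function assumed unbreakable (collision-resistant), and $Sig_u(X)$ denotes a digital signature of $X$ by node $u$, assumed unforgeable. A transaction is a five-tuple $tx_i=\langle \mathrm{Source}_i, s_i, d_i, a_i, r_i\rangle$ (set of source transactions, sender, receiver, transacted value, remaining value). Each node $u$ keeps an individual chain of blocks $B_{u,1}, B_{u,2},\ldots$, where $B_{u,k}=\{H(B_{u,k-1}), t_{u,k,1}, t_{u,k,2},\ldots\}$ is an ordered set and $t_{u,k,l}$ denotes the $l$-th transaction in $B_{u,k}$, sent by $u$ (the genesis block $B_{u,1}$ has no predecessor hash). The abstract of $B_{u,k}$ is $A_{u,k}=\langle u,k,H(B_{u,k}), Sig_u(u\|k\|H(B_{u,k}))\rangle$. A main chain, maintained by a Byzantine-fault-tolerant consensus protocol, contains abstracts; everything on it is agreed on by all honest nodes and cannot be altered. A block $B_{u,k}$ is confirmed (by $A_{u,k'}$) if (i) an abstract $A_{u,k'}$ with $k'\ge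 k$ is on the main chain, and (ii) every abstract $A_{u,l}$ of node $u$ on the main chain with $l\le k'$ is compliant with its corresponding block (i.e. contains its hash and a correct signature). A transaction $tx_i$ with $s_i=u$, $tx_i\in B_{u,k}$, is confirmed (by $A_{u,k'}$) if $B_{u,k}$ is confirmed by $A_{u,k'}$. *)

(* Defs.v *)
From Stdlib Require Import List Arith Lia.
Import ListNotations.
Set Implicit Arguments.

(* A transaction <Source_i, s_i, d_i, a_i, r_i>; source transactions are referred to by identifiers. *)
Record Tx := mkTx {
  tx_src : list nat;
  tx_snd : nat;
  tx_rcv : nat;
  tx_amt : nat;
  tx_rem : nat
}.

(* A block B_{u,k} = {H(B_{u,k-1}), t_{u,k,1}, t_{u,k,2}, ...}; genesis has no predecessor hash. *)
Record Block (Hash : Type) := mkBlock {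
  blk_prev : option Hash;
  blk_txs  : list Tx
}.

Record MCAbstract (Hash Sg : Type) := mkAbstract {
  abs_node : nat;
  abs_idx  : nat;
  abs_hash : Hash;
  abs_sig  : Sg
}.

(* Hash function assumed unbreakable: idealized as injective. *)
Definition collision_resistant (Hash : Type) (H : Block Hash -> Hash) : Prop :=
  forall b1 b2, H b1 = H b2 -> b1 = b2.

Definition compliant (Hash Sg : Type) (H : Block Hash -> Hash)
  (Sig : nat -> nat * nat * Hash -> Sg) (a : MCAbstract Hash Sg) (b : Block Hash) : Prop :=
  abs_hash a = H b /\ abs_sig a = Sig (abs_node a) (abs_node a, abs_idx a, abs_hash a).

(* Block B_{u,k} of the chain B (indexed from 1) is confirmed by A_{u,k'} w.r.t. main chain `main`. *)
Definition block_confirmed_by (Hash Sg : Type) (H : Block Hash -> Hash)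
  (Sig : nat -> nat * nat * Hash -> Sg) (main : list (MCAbstract Hash Sg))
  (u : nat) (B : nat -> Block Hash) (k k' : nat) : Prop :=
  k <= k' /\
  (exists a, In a main /\ abs_node a = u /\ abs_idx a = k') /\
  (forall a, In a main -> abs_node a = u -> abs_idx a <= k' -> compliant H Sig a (B (abs_idx a))).

Definition individual_chain (Hash : Type) (H : Block Hash -> Hash) (B : nat -> Block Hash) : Prop :=
  blk_prev (B 1) = None /\ forall m, 2 <= m -> blk_prev (B m) = Some (H (B (m - 1))).

(* Main.v *)
Require Import Defs.
From Stdlib Require Import List Arith Lia.

Theorem theorem1 :
  forall (Hash Sg : Type) (H : Block Hash -> Hash) (Sig : nat -> nat * nat * Hash -> Sg)
    (N : nat) (main : list (MCAbstract Hash Sg)) (u : nat)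
    (B : nat -> Block Hash) (k k' l : nat) (txi : Tx),
    collision_resistant H ->
    1 <= u <= N ->
    individual_chain H B ->
    1 <= k ->
    nth_error (blk_txs (B k)) l = Some txi ->
    tx_snd txi = u ->
    block_confirmed_by H Sig main u B k k' ->
    ~ (exists B' : nat -> Block Hash,
          (forall m, 2 <= m <= k' -> blk_prev (B' m) = Some (H (B' (m - 1)))) /\
          (forall m, 1 <= m <= k' -> block_confirmed_by H Sig main u B' m k') /\
          (exists t', nth_error (blk_txs (B' k)) l = Some t' /\ t' <> txi)).
Proof.
  unfold individual_chain, block_confirmed_by, not.
  intros Hash Sg H Sig N main u B k k' l txi HCR Hu [HB1 HB] Hk Hn Hs [Hkk [[a [Ha [Hau Hai]]] Hc]]

    [B' [HB' [Hc' [t' [Ht' Hne]]]]].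
  destruct (Hc' k (conj Hk Hkk)) as [_ [_ Hc2]].
  destruct (Hc a Ha Hau ltac:(lia)) as [E1 _].
  destruct (Hc2 a Ha Hau ltac:(lia)) as [E2 _].
  rewrite Hai in E1, E2.
  assert (Htop : B k' = B' k') by (apply HCR; congruence).
  assert (Hall : forall j, j <= k' - k -> B (k' - j) = B' (k' - j)).
  { induction j as [|j IH]; intros Hj.
    - rewrite Nat.sub_0_r; exact Htop.
    - assert (E : B (k' - j) = B' (k' - j)) by (apply IH; lia).
      assert (P1 := HB (k' - j) ltac:(lia)).
      assert (P2 := HB' (k' - j) ltac:(lia)).
      rewrite E, P2 in P1. injection P1 as P1.
      replace (k' - S j) with (k' - j - 1) by lia.
      apply HCR; congruence. }
  assert (Ek := Hall (k' - k) (le_n _)).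
  replace (k' - (k' - k)) with k in Ek by lia.
  rewrite Ek, Ht' in Hn. injection Hn as Hn. congruence.
Qed.
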